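(* Let $n\ge 5$ and let $\sigma$ be a maximal simplex of $\Delta_n$. If $|N(w)\cap\sigma|\ge 2$ for all $w\in\sigma$, then there exists $\tilde v\in\sigma$ with $|N(\tilde v)\cap\sigma|\ge 3$.
   Context: $\mathbb{I}_n$ is the $n$-dimensional hypercube graph on vertex set $\{0,1\}^n$ (adjacent iff differing in exactly one coordinate), with Hamming distance $d(v,w)=\#\{i: v(i)\ne w(i)\}$. $\Delta_n=\mathcal{VR}(\mathbb{I}_n;3)$ is the simplicial complex whose simplices are the subsets $\sigma\subseteq\{0,1\}^n$ with $d(x,y)\le 3$ for all $x,y\in\sigma$. $N(v)$ denotes the set of the $n$ vertices adjacent to $v$ in $\mathbb{I}_n$. *)

(* Defs.v *)
From mathcomp Require Import all_boot.
Set Implicit Arguments. Unset Strict Implicit. Unset Printing Implicit Defensive.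

(* Vertices of the n-cube I_n: {0,1}^n as finite functions 'I_n -> bool. *)
Definition vert (n : nat) := {ffun 'I_n -> bool}.

Definition hdist n (v w : vert n) : nat := #|[set i | v i != w i]|.

Definition nbhd n (v : vert n) : {set vert n} := [set w | hdist v w == 1].

(* Simplices of Delta_n = VR(I_n; 3): nonempty vertex sets of diameter <= 3. *)
Definition is_simplex n (s : {set vert n}) : bool :=
  (s != set0) && [forall x in s, forall y in s, hdist x y <= 3].

Definition is_maximal_simplex n (s : {set vert n}) : bool :=
  is_simplex s && [forall t : {set vert n}, (is_simplex t && (s \subset t)) ==> (t == s)].

(* Main.v *)
Require Import Defs.
From mathcomp Require Import all_boot.
From mathcomp Require zify.
From Stdlib Require Import Lia.

Set Implicit Arguments. Unset Strict Implicit. Unset Printing Implicit Defensive.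

Definition dd (T : finType) (A B : {set T}) := #|A| + #|B| - 2 * #|A :&: B|.

Lemma cI1 (T : finType) (Z : {set T}) (a : T) : #|Z :&: [set a]| = (a \in Z).
Proof.
case aZ: (a \in Z).
  by rewrite (setIidPr _) ?cards1 // sub1set.
suff -> : Z :&: [set a] = set0 by rewrite cards0.
apply/setP=> x; rewrite !inE; apply/negbTE/andP => -[xZ /eqP xa].
by rewrite xa aZ in xZ.
Qed.

Lemma cIU1 (T : finType) (Z : {set T}) (a : T) (B : {set T}) :
  a \notin B -> #|Z :&: (a |: B)| = (a \in Z) + #|Z :&: B|.
Proof.
move=> aB; rewrite setIUr cardsU cI1.
have -> : (Z :&: [set a]) :&: (Z :&: B) = set0.
  apply/setP=> x; rewrite !inE; apply/negbTE/andP => -[/andP [_ /eqP xa] /andP [_ xB]].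
  by rewrite xa (negbTE aB) in xB.
by rewrite cards0 subn0.
Qed.

Lemma cIU1r (T : finType) (Z : {set T}) (a : T) (B : {set T}) :
  a \notin B -> #|Z :&: (B :|: [set a])| = #|Z :&: B| + (a \in Z).
Proof. by move=> aB; rewrite setUC cIU1 // addnC. Qed.

Lemma cI2 (T : finType) (Z : {set T}) (a b : T) : a != b ->
  #|Z :&: [set a; b]| = (a \in Z) + (b \in Z).
Proof. by move=> ab; rewrite cIU1 ?cI1 // inE. Qed.

Lemma cI3 (T : finType) (Z : {set T}) (a b c : T) : a != b -> a != c -> b != c ->
  #|Z :&: [set a; b; c]| = (a \in Z) + (b \in Z) + (c \in Z).
Proof.
move=> ab ac bc; rewrite cIU1r ?cI2 // !inE; by apply/norP; split; rewrite eq_sym.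
Qed.

Lemma cI4 (T : finType) (Z : {set T}) (a b c d : T) :
  a != b -> a != c -> a != d -> b != c -> b != d -> c != d ->
  #|Z :&: [set a; b; c; d]| = (a \in Z) + (b \in Z) + (c \in Z) + (d \in Z).
Proof.
move=> ab ac ad bc bd cd; rewrite cIU1r ?cI3 // !inE; by apply/norP; split; [apply/norP; split|]; rewrite eq_sym.
Qed.

Lemma c1 (T : finType) (a : T) : #|[set a]| = 1.
Proof. exact: cards1. Qed.

Lemma c2 (T : finType) (a b : T) : a != b -> #|[set a; b]| = 2.
Proof. by move=> ab; rewrite -(setTI [set a; b]) cI2 // !in_setT. Qed.

Lemma c3 (T : finType) (a b c : T) : a != b -> a != c -> b != c ->
  #|[set a; b; c]| = 3.
Proof. by move=> ab ac bc; rewrite -(setTI [set a; b; c]) cI3 // !in_setT. Qed.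

Lemma lb4 (T : finType) (Y : {set T}) (a b c d : T) :
  a != b -> a != c -> a != d -> b != c -> b != d -> c != d ->
  (a \in Y) + (b \in Y) + (c \in Y) + (d \in Y) <= #|Y|.
Proof.
move=> ab ac ad bc bd cd; rewrite -(cI4 Y ab ac ad bc bd cd).
exact/subset_leq_card/subsetIl.
Qed.

Lemma ddE0 (T : finType) (A Y : {set T}) : dd A Y = #|A| + #|Y| - 2 * #|Y :&: A|.
Proof. by rewrite /dd setIC. Qed.

Lemma ddC (T : finType) (A B : {set T}) : dd A B = dd B A.
Proof. by rewrite /dd setIC addnC. Qed.

Lemma id2 (T : finType) (Y : {set T}) (a b : T) : a != b -> #|Y| = 2 ->
  a \in Y -> b \in Y -> Y = [set a; b].
Proof.
move=> ab cY aY bY; apply/esym/eqP; rewrite eqEcard cY c2 // leqnn andbT.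
by apply/subsetP => x; rewrite !inE => /orP [] /eqP ->.
Qed.

Lemma id3 (T : finType) (Y : {set T}) (a b c : T) : a != b -> a != c -> b != c ->
  #|Y| = 3 -> a \in Y -> b \in Y -> c \in Y -> Y = [set a; b; c].
Proof.
move=> ab ac bc cY aY bY cY'; apply/esym/eqP; rewrite eqEcard cY c3 // leqnn andbT.
by apply/subsetP => x; rewrite !inE => /orP [/orP [] |] /eqP ->.
Qed.

Lemma neq_mem (T : finType) (A B : {set T}) (x : T) : x \in A -> x \notin B -> A != B.
Proof. by move=> xA xB; apply/eqP => E; rewrite E in xA; rewrite xA in xB. Qed.

Lemma core (T : finType) (P : {set T} -> bool) :
  2 < #|T| -> P set0 ->
  (forall A B, P A -> P B -> dd A B <= 3) ->
  (forall X, ~~ P X -> exists2 Y, P Y & 3 < dd X Y) ->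
  (forall A, P A -> exists B1 B2, [/\ B1 != B2, P B1, P B2, dd A B1 = 1 & dd A B2 = 1]) ->
  (forall A B1 B2 B3, P A -> P B1 -> P B2 -> P B3 -> B1 != B2 -> B1 != B3 -> B2 != B3 ->
     dd A B1 = 1 -> dd A B2 = 1 -> dd A B3 = 1 -> False) ->
  False.
Proof.
move=> cT P0 Hd Hm Hg H3.
have dd0 : forall Y : {set T}, dd set0 Y = #|Y|.
  by move=> Y; rewrite /dd set0I cards0 add0n muln0 subn0.
have Hs : forall Y, P Y -> #|Y| <= 3.
  by move=> Y PY; have := Hd _ _ P0 PY; rewrite dd0.
have [B1 [B2 [nB PB1 PB2 dB1 dB2]]] := Hg _ P0.
rewrite dd0 in dB1; rewrite dd0 in dB2.
have /cards1P [i Ei] : #|B1| == 1 by rewrite dB1.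
have /cards1P [j Ej] : #|B2| == 1 by rewrite dB2.
subst B1 B2.
have ij : i != j by apply: contraNneq nB => ->.
have stepm : forall k, k != i -> k != j ->
    exists m, [/\ m != i, m != j, m != k & P [set i; j; m]].
  move=> k ki kj.
  have nPk : ~~ P [set k].
    apply/negP => Pk; apply: (H3 _ _ _ _ P0 PB1 PB2 Pk).
    - by apply: (@neq_mem _ _ _ i); rewrite !inE ?eqxx // eq_sym.
    - by apply: (@neq_mem _ _ _ i); rewrite !inE ?eqxx // eq_sym.
    - by apply: (@neq_mem _ _ _ j); rewrite !inE ?eqxx // eq_sym.
    - by rewrite dd0 cards1.
    - by rewrite dd0 cards1.
    - by rewrite dd0 cards1.
  have [Y PY dY] := Hm _ nPk.
  have sY := Hs _ PY.
  have di := Hd _ _ PB1 PY; have dj := Hd _ _ PB2 PY.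
  rewrite ddE0 cI1 cards1 in dY; rewrite ddE0 cI1 cards1 in di; rewrite ddE0 cI1 cards1 in dj.
  have cY : #|Y| = 3 by clear -dY di dj sY; lia.
  have kY : (k \in Y) = false by clear -dY di dj sY; lia.
  have iY : (i \in Y) = true by clear -dY di dj sY; lia.
  have jY : (j \in Y) = true by clear -dY di dj sY; lia.
  have : 0 < #|Y :\: [set i; j]| by rewrite cardsD cI2 // cY iY jY.
  rewrite card_gt0 => /set0Pn [m]; rewrite !inE negb_or => /andP [/andP [mi mj] mY].
  exists m; split => //.
    by apply: contraNneq (negbT kY) => <-.
  by rewrite -(id3 ij (negbT _) (negbT _) cY iY jY mY) // eq_sym; apply/negbTE.
have : ~~ ([set: T] \subset [set i; j]).
  by apply/negP => /subset_leq_card H; rewrite cardsT c2 // in H; clear -cT H; lia.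
case/subsetPn => k1 _; rewrite !inE negb_or => /andP [k1i k1j].
have [m1 [m1i m1j _ P1]] := stepm _ k1i k1j.
have [m2 [m2i m2j m21 P2]] := stepm _ m1i m1j.
have L3 : forall x y y', x != y -> x != y' -> y != y' ->
    P [set x] -> P [set x; y] -> P [set x; y'] -> False.
  move=> x y y' xy xy' yy' Px Pxy Pxy'.
  apply: (H3 _ _ _ _ Px P0 Pxy Pxy').
  - by rewrite eq_sym; apply: (@neq_mem _ _ _ x); rewrite !inE ?eqxx.
  - by rewrite eq_sym; apply: (@neq_mem _ _ _ x); rewrite !inE ?eqxx.
  - apply: (@neq_mem _ _ _ y); rewrite !inE ?eqxx ?orbT //=.
    apply/negP => /orP [] /eqP E; [by rewrite E eqxx in xy | by rewrite E eqxx in yy'].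
  - by rewrite ddC dd0 cards1.
  - by rewrite ddE0 cI1 c2 // cards1 !inE eqxx.
  - by rewrite ddE0 cI1 c2 // cards1 !inE eqxx.
have L5 : forall y y', i != y -> i != y' -> j != y -> j != y' -> y != y' ->
    P [set i; y] -> P [set j; y] -> P [set i; j; y'] -> ~~ P [set i; j] -> False.
  move=> y y' iy iy' jy jy' yy' Piy Pjy Pijy nPij.
  have [B [_ [_ PB _ dB _]]] := Hg _ Pijy.
  have sB := Hs _ PB.
  have d1 := Hd _ _ Piy PB; have d2 := Hd _ _ Pjy PB.
  have lb := lb4 B ij iy iy' jy jy' yy'.
  rewrite ddE0 cI3 // c3 // in dB.
  rewrite ddE0 cI2 // c2 // in d1; rewrite ddE0 cI2 // c2 // in d2.
  have cB : #|B| = 2 by clear -dB d1 d2 lb sB; lia.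
  have iB : (i \in B) = true by clear -dB d1 d2 lb sB; lia.
  have jB : (j \in B) = true by clear -dB d1 d2 lb sB; lia.
  by rewrite -(id2 ij cB iB jB) PB in nPij.
have step4 : forall x x' y y', x != x' -> x != y -> x != y' -> x' != y -> x' != y' -> y != y' ->
    P [set x] -> P [set x; x'; y] -> P [set y; y'] -> P [set x; y] || P [set x'; y'].
  move=> x x' y y' xx' xy xy' x'y x'y' yy' Px Pxxy Pyy.
  case Pxy: (P [set x; y]) => //=.
  have [Y PY dY] := Hm _ (negbT Pxy).
  have sY := Hs _ PY.
  have d1 := Hd _ _ Px PY; have d2 := Hd _ _ Pxxy PY; have d3 := Hd _ _ Pyy PY.
  have lb := lb4 Y xx' xy xy' x'y x'y' yy'.
  rewrite ddE0 cI2 // c2 // in dY.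
  rewrite ddE0 cI1 cards1 in d1.
  rewrite ddE0 cI3 // c3 // in d2.
  rewrite ddE0 cI2 // c2 // in d3.
  have cY : #|Y| = 2 by clear -dY d1 d2 d3 lb sY; lia.
  have x'Y : (x' \in Y) = true by clear -dY d1 d2 d3 lb sY; lia.
  have y'Y : (y' \in Y) = true by clear -dY d1 d2 d3 lb sY; lia.
  by rewrite -(id2 x'y' cY x'Y y'Y).
have im1 : i != m1 by rewrite eq_sym.
have im2 : i != m2 by rewrite eq_sym.
have jm1 : j != m1 by rewrite eq_sym.
have jm2 : j != m2 by rewrite eq_sym.
have m12 : m1 != m2 by rewrite eq_sym.
have nPij : ~~ P [set i; j].
  apply/negP => Pij; apply: (H3 _ _ _ _ Pij PB1 PB2 P1).
  - by apply: (@neq_mem _ _ _ i); rewrite !inE ?eqxx // eq_sym.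
  - by rewrite eq_sym; apply: (@neq_mem _ _ _ j); rewrite !inE ?eqxx ?orbT //= eq_sym.
  - by rewrite eq_sym; apply: (@neq_mem _ _ _ i); rewrite !inE ?eqxx ?orbT //=.
  - by rewrite ddE0 cI2 // c2 // cards1 !inE eqxx eq_sym (negbTE ij).
  - by rewrite ddE0 cI2 // c2 // cards1 !inE eqxx (negbTE ij).
  - by rewrite ddE0 cI2 // c2 // c3 // !inE !eqxx /= orbT.
have Pc : P [set m1; m2].
  have [Y PY dY] := Hm _ nPij.
  have sY := Hs _ PY.
  have d1 := Hd _ _ PB1 PY; have d2 := Hd _ _ P1 PY; have d3 := Hd _ _ P2 PY.
  have lb := lb4 Y ij im1 im2 jm1 jm2 m12.
  rewrite ddE0 cI2 // c2 // in dY.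
  rewrite ddE0 cI1 cards1 in d1.
  rewrite ddE0 cI3 // c3 // in d2.
  rewrite ddE0 cI3 // c3 // in d3.
  have cY : #|Y| = 2 by clear -dY d1 d2 d3 lb sY; lia.
  have aY : (m1 \in Y) = true by clear -dY d1 d2 d3 lb sY; lia.
  have bY : (m2 \in Y) = true by clear -dY d1 d2 d3 lb sY; lia.
  by rewrite -(id2 m12 cY aY bY).
have Pc' : P [set m2; m1] by rewrite setUC.
case/orP: (step4 _ _ _ _ ij im1 im2 jm1 jm2 m12 PB1 P1 Pc) => [Pa|Pb];
case/orP: (step4 _ _ _ _ ij im2 im1 jm2 jm1 m21 PB1 P2 Pc') => [Pc2|Pd].
- exact: (L3 _ _ _ im1 im2 m12 PB1 Pa Pc2).
- exact: (L5 _ _ im1 im2 jm1 jm2 m12 Pa Pd P2 nPij).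
- exact: (L5 _ _ im2 im1 jm2 jm1 m21 Pc2 Pb P1 nPij).
- exact: (L3 _ _ _ jm2 jm1 m21 PB2 Pb Pd).
Qed.

Definition fl n (w : vert n) (A : {set 'I_n}) : vert n := [ffun i => w i (+) (i \in A)].
Definition Dv n (w v : vert n) : {set 'I_n} := [set i | v i != w i].

Lemma Dfl n (w : vert n) A : Dv w (fl w A) = A.
Proof. by apply/setP => i; rewrite !inE ffunE; case: (w i); case: (i \in A). Qed.

Lemma flD n (w v : vert n) : fl w (Dv w v) = v.
Proof. by apply/ffunP => i; rewrite ffunE inE; case: (w i); case: (v i). Qed.

Lemma hdistD n (w x y : vert n) : hdist x y = dd (Dv w x) (Dv w y).
Proof.
rewrite /hdist /dd.
have -> : [set i | x i != y i] = (Dv w x :|: Dv w y) :\: (Dv w x :&: Dv w y).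
  by apply/setP => i; rewrite !inE; case: (x i); case: (y i); case: (w i).
have sub : Dv w x :&: Dv w y \subset Dv w x :|: Dv w y.
  by apply/subsetP => i; rewrite !inE => /andP [-> _].
rewrite cardsD cardsU (setIidPr sub).
by rewrite mulSn mul1n subnDA.
Qed.

Lemma fl0 n (w : vert n) : fl w set0 = w.
Proof. by apply/ffunP => i; rewrite ffunE inE addbF. Qed.

Theorem mainTheorem9 (n : nat) (s : {set vert n}) :
  5 <= n ->
  is_maximal_simplex s ->
  (forall w, w \in s -> 2 <= #|nbhd w :&: s|) ->
  exists2 v, v \in s & 3 <= #|nbhd v :&: s|.
Proof.
move=> n5 /andP [/andP [sne sdiam] smax] Hdeg.
case: (boolP [exists v, (v \in s) && (3 <= #|nbhd v :&: s|)]).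
  by case/existsP => v /andP [vs hv]; exists v.
move=> hno; exfalso.
case/set0Pn: sne => w ws.
have hd3 : forall x y, x \in s -> y \in s -> hdist x y <= 3.
  by move=> x y xs ys; move/forall_inP: sdiam => /(_ _ xs) /forall_inP /(_ _ ys).
apply: (@core _ (fun A => fl w A \in s)).
- by rewrite card_ord; apply: leq_trans n5.
- by rewrite fl0.
- by move=> A B PA PB; rewrite -(Dfl w A) -(Dfl w B) -hdistD; apply: hd3.
- move=> X nPX.
  case: (boolP [exists Y, (fl w Y \in s) && (3 < dd X Y)]).
    by case/existsP => Y /andP [PY dY]; exists Y.
  move=> hn; exfalso.
  have hX : forall y, y \in s -> hdist (fl w X) y <= 3.
    move=> y ys; rewrite (hdistD w) Dfl leqNgt.
    apply: contra hn => dY; apply/existsP; exists (Dv w y).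
    by rewrite flD ys.
  have hsym : forall x y : vert n, hdist x y = hdist y x.
    by move=> x y; rewrite (hdistD w) ddC -hdistD.
  have hxx : forall x : vert n, hdist x x = 0.
    by move=> x; rewrite /hdist; apply/eqP; rewrite cards_eq0; apply/eqP/setP => i; rewrite !inE eqxx.
  have : is_simplex (fl w X |: s) && (s \subset fl w X |: s).
    rewrite subsetUr andbT /is_simplex; apply/andP; split.
      by apply/set0Pn; exists (fl w X); rewrite !inE eqxx.
    apply/forall_inP => x; rewrite !inE => /orP [/eqP -> | xs];
    apply/forall_inP => y; rewrite !inE => /orP [/eqP -> | ys].
    + by rewrite hxx.
    + exact: hX.
    + by rewrite hsym; apply: hX.
    + exact: hd3.
  move/forallP: smax => /(_ (fl w X |: s)) /implyP H /H /eqP E.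
  have : fl w X \in fl w X |: s by rewrite !inE eqxx.
  by rewrite E (negbTE nPX).
- move=> A PA.
  have /card_gt1P [x1 [x2 [x1in x2in ne]]] := Hdeg _ PA.
  move: x1in x2in; rewrite !inE => /andP [d1 x1s] /andP [d2 x2s].
  exists (Dv w x1), (Dv w x2); split.
  + by apply: contra ne => /eqP E; rewrite -(flD w x1) E flD.
  + by rewrite flD.
  + by rewrite flD.
  + by rewrite -{1}(Dfl w A) -hdistD; apply/eqP.
  + by rewrite -{1}(Dfl w A) -hdistD; apply/eqP.
- move=> A B1 B2 B3 PA PB1 PB2 PB3 n12 n13 n23 d1 d2 d3.
  move/existsP: hno; apply; exists (fl w A); rewrite PA /=.
  have inj : forall B C, B != C -> fl w B != fl w C.
    by move=> B C; apply: contra => /eqP E; rewrite -(Dfl w B) E Dfl.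
  rewrite -(c3 (inj _ _ n12) (inj _ _ n13) (inj _ _ n23)).
  apply: subset_leq_card; apply/subsetP => x.
  rewrite !inE => /orP [/orP [] | ] /eqP ->; rewrite ?PB1 ?PB2 ?PB3 andbT
    (hdistD w) !Dfl ?d1 ?d2 ?d3 //.
Qed.
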